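(* For every $n \in \mathbb{N}$, let $\lambda_n$ be the smallest positive integer such that $\lambda_n P^{(k)} \in E_n$ for every $P \in E_n$ and every $k \in \mathbb{N}$. Then $$\lambda_n = q_n = \prod_{p \text{ prime}} p^{\lfloor n/p \rfloor}.$$
   Context: For $n \in \mathbb{N}$, $E_n$ denotes the set of polynomials $P \in \mathbb{C}[X]$ of degree $\leq n$ (including the zero polynomial) such that $P(\mathbb{Z}) \subset \mathbb{Z}$; $P^{(k)}$ denotes the $k$-th derivative ($P^{(0)} = P$). For $n \in \mathbb{N}$, $$q_n = \mathrm{lcm}\bigl(\{1\}\cup\{i_1 i_2 \cdots i_k : k \in \mathbb{N}^*,\ i_1,\dots,i_k \in \mathbb{N}^*,\ i_1+\dots+i_k \leq n\}\bigr),$$ where $\mathbb{N}^*$ denotes the positive integers. $\lfloor\cdot\rfloor$ is the integer-part function. *)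

(* Defs.v *)
From HB Require Import structures.
From mathcomp Require Import all_boot all_order all_algebra.
Set Implicit Arguments. Unset Strict Implicit. Unset Printing Implicit Defensive.
Import Order.TTheory GRing.Theory Num.Theory.
Local Open Scope ring_scope.

(* E_n : polynomials of degree <= n (size <= n+1, including 0) mapping Z into Z. *)
Definition En (C : numClosedFieldType) (n : nat) (P : {poly C}) : Prop :=
  (size P <= n.+1)%N /\ forall z : int, exists m : int, P.[z%:~R] = m%:~R.

Definition admissible (C : numClosedFieldType) (n l : nat) : Prop :=
  forall (P : {poly C}) (k : nat), En n P -> En n (l%:R *: P^`(k)).

Definition qset (n x : nat) : Prop :=
  x = 1%N \/
  exists s : seq nat, s != [::] /\ all (fun i => 0 < i)%N s /\
    (sumn s <= n)%N /\ x = (\prod_(i <- s) i)%N.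

Definition is_lcm_of (S : nat -> Prop) (d : nat) : Prop :=
  (forall x, S x -> (x %| d)%N) /\
  (forall m, (forall x, S x -> (x %| m)%N) -> (d %| m)%N).

(* Main.v *)
Require Import Defs.
From HB Require Import structures.
From mathcomp Require Import all_boot all_order all_algebra.
From mathcomp Require Import zify ring.
Import Order.TTheory GRing.Theory Num.Theory.

Lemma bern p v : (1 < p)%N -> ((p - 1) * v + 1 <= p ^ v)%N.
Proof.
move=> hp; elim: v => [|v IH]; first by rewrite muln0 expn0.
rewrite expnS. have: (p ^ v >= 1)%N by rewrite expn_gt0; lia. nia.
Qed.

Lemma bern2 p v : (1 < p)%N -> (p + (p - 1) * v.+2 <= p ^ v.+2)%N.
Proof.
move=> hp; elim: v => [|v IH]; first by rewrite expnS expn1; nia.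
rewrite (expnS p v.+2). nia.
Qed.

Lemma logn_le p t : prime p -> (0 < t)%N -> ((p - 1) * logn p t + 1 <= t)%N.
Proof.
move=> pp t0; apply: leq_trans (bern p (logn p t) (prime_gt1 pp)) _.
by apply: dvdn_leq => //; apply: pfactor_dvdnn.
Qed.

Lemma logn_le_div p t : prime p -> (0 < t)%N -> (logn p t <= t %/ p)%N.
Proof.
move=> pp t0; have p1 := prime_gt1 pp.
rewrite leq_divRL; last lia.
have h := logn_le p t pp t0.
case E: (logn p t) => [|v]; first by [].
have: (p ^ v.+1 <= t)%N.
  by rewrite -E; apply: dvdn_leq => //; apply: pfactor_dvdnn.
have := bern p v p1. rewrite expnS. nia.
Qed.

Lemma logn_le_big p s : prime p -> (p < s)%N -> (p + (p - 1) * logn p s <= s)%N.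
Proof.
move=> pp ps; have p1 := prime_gt1 pp.
have s0 : (0 < s)%N by lia.
have hd : (p ^ logn p s <= s)%N by apply: dvdn_leq => //; apply: pfactor_dvdnn.
case E: (logn p s) => [|[|v]]; first by rewrite muln0 addn0 ltnW.
- have : (p %| s)%N by rewrite -(expn1 p) pfactor_dvdn // E.
  case/dvdnP=> w sw. rewrite sw in ps *. clear sw hd s0.
  have : (1 < w)%N by move: ps; case: w => [|[|w]] //; rewrite ?mul0n ?mul1n ?ltnn.
  nia.
- rewrite E in hd. have := bern2 p v p1. lia.
Qed.

Lemma divn_add_le a b p : (a %/ p + b %/ p <= (a + b) %/ p)%N.
Proof.
case: p => [|p]; first by rewrite !divn0.
by rewrite (divnD a b (ltn0Sn p)) leq_addr.
Qed.

Definition G (M : nat) (f : nat -> nat) := (\prod_(p < M | prime p) p ^ f p)%N.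

Lemma G_gt0 M f : (0 < G M f)%N.
Proof.
rewrite /G; elim/big_ind: _ => // [x y|i pi]; first by rewrite muln_gt0 => ->.
by rewrite expn_gt0 prime_gt0.
Qed.

Lemma logn_G q M f : prime q -> logn q (G M f) = if (q < M)%N then f q else 0%N.
Proof.
move=> pq; elim: M => [|M IH]; first by rewrite /G big_ord0 logn1.
rewrite /G big_mkcond big_ord_recr /= -big_mkcond /= -/(G M f).
have g0 := G_gt0 M f.
case: (boolP (prime M)) => pM /=.
  rewrite lognM // ?expn_gt0 ?prime_gt0 // lognX (logn_prime _ pM) IH.
  case: (ltngtP q M) => h.
  - by rewrite muln0 addn0 ltnS (ltnW h).
  - by rewrite muln0 ltnNge h.
  - by subst; rewrite ltnSn muln1.
rewrite muln1 IH; case: (ltngtP q M) => h.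
- by rewrite ltnS (ltnW h).
- by rewrite ltnNge h.
- by subst; rewrite pq in pM.
Qed.

Lemma dvd_crit d m : (0 < d)%N -> (0 < m)%N ->
  (forall p, prime p -> (logn p d <= logn p m)%N) -> (d %| m)%N.
Proof.
move=> d0 m0 h; apply/dvdn_partP => // p; rewrite mem_primes => /and3P[pp _ _].
by rewrite p_part pfactor_dvdn // h.
Qed.

Definition Qn N := G N.+1 (fun p => N %/ p).

Lemma Qn_gt0 N : (0 < Qn N)%N.
Proof. exact: G_gt0. Qed.

Lemma logn_Qn q N : prime q -> logn q (Qn N) = (N %/ q)%N.
Proof.
move=> pq; rewrite /Qn logn_G //; case: ifP => // h.
by rewrite divn_small //; lia.
Qed.

Lemma Qn_K t a : (0 < t)%N -> (t * Qn a %| Qn (a + t))%N.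
Proof.
move=> t0; apply: dvd_crit; rewrite ?muln_gt0 ?t0 ?Qn_gt0 // => q pq.
rewrite lognM ?Qn_gt0 // !logn_Qn //.
apply: leq_trans (divn_add_le a t q).
have := logn_le_div q t pq t0; lia.
Qed.

Lemma Qn_mono a b : (a <= b)%N -> (Qn a %| Qn b)%N.
Proof.
move=> ab; have [->|h] := eqVneq a b; first by [].
have t0 : (0 < b - a)%N by lia.
have := Qn_K (b - a) a t0; rewrite subnKC //.
exact: dvdn_trans (dvdn_mull _ (dvdnn _)).
Qed.

Lemma Qn_dvd n m : (0 < m)%N ->
  (forall p, prime p -> (p <= n)%N -> (p ^ (n %/ p) %| m)%N) -> (Qn n %| m)%N.
Proof.
move=> m0 h; apply: dvd_crit; rewrite ?Qn_gt0 // => p pp.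
rewrite logn_Qn //; case: (leqP p n) => pn.
  by rewrite -pfactor_dvdn // h.
by rewrite divn_small.
Qed.

Section Poly.
Variable C : numClosedFieldType.
Local Open Scope ring_scope.

Fixpoint B (j : nat) : {poly C} :=
  if j is j'.+1 then (j'.+1%:R)^-1 *: (B j' * ('X - (j'%:R)%:P)) else 1.
Arguments B : simpl never.

Lemma BS j : B j.+1 = (j.+1%:R)^-1 *: (B j * ('X - (j%:R)%:P)).
Proof. by []. Qed.

Lemma hornerB0 x : (B 0).[x] = 1.
Proof. by rewrite /B -polyC1 hornerC. Qed.

Definition intC (x : C) := exists m : int, x = m%:~R.

Lemma intC_add x y : intC x -> intC y -> intC (x + y).
Proof. by move=> [a ->] [b ->]; exists (a + b); rewrite intrD. Qed.
Lemma intC_mul x y : intC x -> intC y -> intC (x * y).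
Proof. by move=> [a ->] [b ->]; exists (a * b); rewrite intrM. Qed.
Lemma intC_opp x : intC x -> intC (- x).
Proof. by move=> [a ->]; exists (- a); rewrite mulrNz. Qed.
Lemma intC_nat (k : nat) : intC k%:R.
Proof. by exists k%:Z. Qed.
Lemma intC_int (k : int) : intC k%:~R.
Proof. by exists k. Qed.
Lemma intC_sign k : intC ((-1) ^+ k).
Proof. by exists ((-1) ^+ k); rewrite rmorphXn /= rmorphN1. Qed.

Lemma natC_inj (a b : nat) : (a%:R : C) = b%:R -> a = b.
Proof. by move/eqP; rewrite eqr_nat => /eqP. Qed.

Lemma natC_neq0 (a : nat) : (0 < a)%N -> (a%:R : C) != 0.
Proof. by rewrite pnatr_eq0; case: a. Qed.

Lemma poly_eq_nat (p q : {poly C}) :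
  (forall k : nat, p.[k%:R] = q.[k%:R]) -> p = q.
Proof.
move=> h; apply/eqP; rewrite -subr_eq0; apply/negPn/negP => nz.
set rs := [seq (i%:R : C) | i <- iota 0 (size (p - q))].
have r1 : all (root (p - q)) rs.
  by apply/allP => x /mapP[k _ ->]; rewrite /root hornerD hornerN h subrr.
have r2 : uniq rs by rewrite map_inj_uniq ?iota_uniq // => a b /natC_inj.
by have := max_poly_roots nz r1 r2; rewrite size_map size_iota ltnn.
Qed.

Lemma const_nat (p : {poly C}) :
  (forall k : nat, p.[k.+1%:R] = p.[k%:R]) -> p = (p.[0])%:P.
Proof.
move=> h; apply: poly_eq_nat => k; rewrite hornerC.
by elim: k => [|k IH] //; rewrite h.
Qed.

Lemma hornerB_S j x :
  (B j.+1).[x] = (j.+1%:R)^-1 * ((B j).[x] * (x - j%:R)).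
Proof. by rewrite BS hornerZ hornerM hornerD hornerN hornerX hornerC. Qed.

Lemma B0 j : (B j).[0] = (j == 0)%:R.
Proof.
elim: j => [|j IH]; first by rewrite hornerB0.
rewrite hornerB_S; case: j IH => [|j] IH; first by rewrite sub0r oppr0 !mulr0.
by rewrite IH /= !mul0r mulr0.
Qed.

Lemma pascal_pt j x : (B j.+1).[x + 1] = (B j.+1).[x] + (B j).[x].
Proof.
elim: j x => [|j IH] x.
  have e1 : forall y, (1 : {poly C}).[y] = 1 by move=> y; rewrite -polyC1 hornerC.
  by rewrite !hornerB_S !hornerB0; field.
rewrite hornerB_S IH !hornerB_S.
have h1 : (j.+1%:R : C) != 0 by rewrite natC_neq0.
have h2 : (j.+2%:R : C) != 0 by rewrite natC_neq0.
move: h1 h2; rewrite -!natr1 => h1 h2.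
field; rewrite ?h1 ?h2 //.
Qed.

Lemma intC_step (f : C -> C) : intC (f 0) ->
  (forall z : int, intC (f (z%:~R + 1) - f z%:~R)) -> forall z : int, intC (f z%:~R).
Proof.
move=> h0 hs.
have key : forall n : nat, intC (f n%:R) /\ intC (f (- n%:R)).
  elim=> [|n [IH1 IH2]]; first by rewrite oppr0.
  split.
    have := hs n; rewrite -natr1 => h.
    have -> : f (n%:R + 1) = f n%:R + (f (n%:R + 1) - f n%:R) by rewrite addrCA subrr addr0.
    exact: intC_add.
  have := hs (Negz n); rewrite NegzE mulrNz => h.
  have e : (- n.+1%:Z)%:~R + 1 = - (n%:R : C).
    by rewrite mulrNz -pmulrn -natr1 opprD subrK.
  rewrite e in h.
  have -> : f (- n.+1%:R) = f (- n%:R) - (f (- n%:R) - f (- n.+1%:R)) by rewrite opprB addrCA subrr addr0.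
  by apply: intC_add => //; apply: intC_opp.
case=> n; first by case: (key n).
by rewrite NegzE mulrNz; case: (key n.+1).
Qed.

Lemma B_int j (z : int) : intC (B j).[z%:~R].
Proof.
elim: j z => [|j IH] z.
  by exists 1; rewrite hornerB0.
apply: (intC_step (fun x => (B j.+1).[x])) => [|w].
  by rewrite B0; exact: intC_nat.
by rewrite pascal_pt addrC addKr.
Qed.

Definition Sh : {poly C} := 'X + 1%:P.

Lemma hornerSh x : Sh.[x] = x + 1.
Proof. by rewrite /Sh hornerD hornerX hornerC. Qed.

Lemma size_Sh_comp (P : {poly C}) : size (P \Po Sh) = size P.
Proof. by rewrite size_comp_poly2 // size_XaddC. Qed.

Lemma alg1 (a b Q : {poly C}) : a * ('X + 1%:P) + b - (Q * 'X + b) = (a - Q) * 'X + a.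
Proof. by rewrite polyC1; ring. Qed.

Lemma size_delta (P : {poly C}) : (size (P \Po Sh - P)%R <= (size P).-1)%N.
Proof.
elim/poly_ind: P => [|Q c IH]; first by rewrite comp_poly0 subrr size_poly0.
rewrite comp_poly_MXaddC.
have -> : (Q \Po Sh) * Sh + c%:P - (Q * 'X + c%:P) = (Q \Po Sh - Q) * 'X + (Q \Po Sh).
  by rewrite /Sh alg1.
rewrite size_MXaddC.
have [->|Qn0] := eqVneq Q 0.
  by rewrite comp_poly0 subrr mul0r add0r size_poly0.
rewrite /= (leq_trans (size_add _ _)) //.
rewrite geq_max size_Sh_comp leqnn andbT.
have [->|Dn0] := eqVneq (Q \Po Sh - Q) 0; first by rewrite mul0r size_poly0.
have hq : (0 < size Q)%N by rewrite size_poly_gt0.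
by rewrite size_mulX //; move: IH; case: (size Q) hq.
Qed.

Lemma expand n (P : {poly C}) : (size P <= n.+1)%N ->
  (forall z : int, intC P.[z%:~R]) ->
  exists c : nat -> int, P = \sum_(j < n.+1) (c j)%:~R *: B j.
Proof.
elim: n P => [|n IH] P sP hP.
  have [m hm] := hP 0.
  exists (fun _ => m); rewrite big_ord1 /= -mul_polyC mulr1 -hm.
  by rewrite (size1_polyC sP) hornerC.
have sD : (size (P \Po Sh - P)%R <= n.+1)%N.
  by apply: leq_trans (size_delta P) _; move: sP; case: (size P).
have hD : forall z : int, intC (P \Po Sh - P).[z%:~R].
  move=> z; rewrite hornerD hornerN horner_comp hornerSh.
  have := hP (z + 1); rewrite intrD => h.
  by apply: intC_add => //; apply: intC_opp.
have [c hc] := IH _ sD hD.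
have [m hm] := hP 0.
pose R := P - (P.[0])%:P - \sum_(j < n.+1) (c j)%:~R *: B j.+1.
have hR : forall x, R.[x + 1] = R.[x].
  move=> x.
  have e1 : (P \Po Sh - P).[x] = \sum_(j < n.+1) (c j)%:~R * (B j).[x].
    by rewrite hc horner_sum; apply: eq_bigr => j _; rewrite hornerZ.
  rewrite hornerD hornerN horner_comp hornerSh in e1.
  rewrite /R !(hornerD, hornerN, hornerC, horner_sum).
  have e2 : \sum_(j < n.+1) ((c j)%:~R *: B j.+1).[x + 1] =
     \sum_(j < n.+1) ((c j)%:~R *: B j.+1).[x] + \sum_(j < n.+1) (c j)%:~R * (B j).[x].
    rewrite -big_split; apply: eq_bigr => j _.
    by rewrite !(hornerZ (c j)%:~R) pascal_pt mulrDr.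
  rewrite e2 -e1.
  move: (P.[x]) (P.[x + 1]) (\sum_(j < n.+1) _) => a b s. 
  by move: (P.[0]) => p0; ring.
have R0 : R = 0.
  rewrite (const_nat R); last by move=> k; rewrite -natr1 hR.
  rewrite /R !(hornerD, hornerN, hornerC, horner_sum) subrr add0r.
  rewrite big1 ?oppr0 ?polyC0 // => j _; by rewrite hornerZ B0 mulr0.
exists (fun j => if j is j'.+1 then c j' else m).
rewrite big_ord_recl /=.
rewrite (eq_bigr (fun i : 'I_n.+1 => (c i)%:~R *: B i.+1)); last by move=> i _; rewrite /bump leq0n add0n add1n.
have hB0 : B 0 = 1 by [].
rewrite hB0 -mul_polyC mulr1 -hm mulr0z.
apply/eqP; rewrite -subr_eq0; apply/eqP; rewrite -[RHS]R0 /R.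
by rewrite opprD addrA.
Qed.

Definition d (t : nat) : C := (-1) ^+ t.-1 / t%:R.

Lemma derivSh : Sh^`() = 1.
Proof. by rewrite /Sh derivD derivX derivC addr0. Qed.

Lemma B0deriv : (B 0)^`() = 0.
Proof. by rewrite /B -polyC1 derivC. Qed.

Lemma dB0 j : ((B j.+1)^`()).[0] = d j.+1.
Proof.
elim: j => [|j IH].
  rewrite BS derivZ derivM derivXsubC B0deriv mul0r add0r mulr1 hornerZ hornerB0.
  by rewrite /d expr0 invr1 mul1r.
rewrite BS derivZ derivM derivXsubC mulr1 hornerZ hornerD hornerM IH B0 /=.
rewrite hornerD hornerN hornerX hornerC add0r addr0 /d /=.
have h1 : (j.+1%:R : C) != 0 by rewrite natC_neq0.
have h2 : (j.+2%:R : C) != 0 by rewrite natC_neq0.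
rewrite exprS; field.
by rewrite -natrD (addrC 1) natr1 !pnatr_eq0 addn_eq0.
Qed.

Lemma pascal_poly j : B j.+1 \Po Sh = B j.+1 + B j.
Proof.
apply: poly_eq_nat => k.
by rewrite horner_comp hornerSh hornerD pascal_pt.
Qed.

Lemma pascal_deriv j x :
  ((B j.+1)^`()).[x + 1] = ((B j.+1)^`()).[x] + ((B j)^`()).[x].
Proof.
have := congr1 (fun p => (p^`()).[x]) (pascal_poly j).
by rewrite /= deriv_comp derivSh mulr1 horner_comp hornerSh derivD hornerD.
Qed.

Definition T j : {poly C} := \sum_(i < j) d i.+1 *: B (j - i.+1).

Lemma T_shift j x : (T j.+1).[x + 1] = (T j.+1).[x] + (T j).[x].
Proof.
rewrite /T !horner_sum big_ord_recr /= [X in _ = X + _]big_ord_recr /=.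
rewrite subnn !(hornerZ (d _)) !hornerB0 -addrA [_ + \sum_(i < j) _]addrC addrA; congr (_ + _).
rewrite -big_split; apply: eq_bigr => i _ /=.
rewrite !(hornerZ (d _)) -mulrDr; congr (_ * _).
rewrite subSS -subnSK //.
by rewrite pascal_pt.
Qed.

Lemma T0 j : (T j.+1).[0] = d j.+1.
Proof.
rewrite /T horner_sum big_ord_recr /= subnn (hornerZ (d _)) hornerB0 mulr1.
rewrite big1 ?add0r // => i _; rewrite (hornerZ (d _)) B0.
by rewrite subn_eq0 leqNgt ltnS (ltn_ord i) mulr0.
Qed.

Lemma derivB j : (B j)^`() = T j.
Proof.
elim: j => [|j IH]; first by rewrite B0deriv /T big_ord0.
apply/eqP; rewrite -subr_eq0; apply/eqP.
rewrite (const_nat (_ - _)).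
  by rewrite hornerD hornerN dB0 T0 subrr.
move=> k; rewrite -natr1 !(hornerD, hornerN) pascal_deriv T_shift IH.
by rewrite opprD addrACA subrr addr0.
Qed.

Definition Sgood j (R : {poly C}) := exists r : nat -> C,
  R = \sum_(i < j.+1) r i *: B i /\
  forall i, (i <= j)%N -> intC ((Qn (j - i))%:R * r i).

Lemma Sgood0 j : Sgood j 0.
Proof.
exists (fun _ => 0); split; last by move=> i _; rewrite mulr0; exact: intC_nat 0.
by rewrite big1 // => i _; rewrite scale0r.
Qed.

Lemma SgoodD j R1 R2 : Sgood j R1 -> Sgood j R2 -> Sgood j (R1 + R2).
Proof.
move=> [r1 [-> h1]] [r2 [-> h2]]; exists (fun i => r1 i + r2 i); split.
  by rewrite -big_split; apply: eq_bigr => i _; rewrite scalerDl.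
by move=> i hi; rewrite mulrDr; apply: intC_add; [exact: h1|exact: h2].
Qed.

Lemma Sgood_sum j (I : finType) (F : I -> {poly C}) :
  (forall i, Sgood j (F i)) -> Sgood j (\sum_i F i).
Proof.
move=> h; elim/big_ind: _ => //; [exact: Sgood0|exact: SgoodD].
Qed.

Lemma Sgood_single j i c : (i <= j)%N -> intC ((Qn (j - i))%:R * c) ->
  Sgood j (c *: B i).
Proof.
move=> hij hc; exists (fun s => if s == i then c else 0); split.
  have hi : (i < j.+1)%N by [].
  rewrite (bigD1 (Ordinal hi)) //= eqxx big1 ?addr0 // => s hs.
  have : (nat_of_ord s != i) by apply: contra hs => /eqP e; apply/eqP/val_inj.
  by move/negbTE => ->; rewrite scale0r.
move=> s hs; case: eqP => [->|_] //.
by rewrite mulr0; exact: intC_nat 0.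
Qed.

Lemma d_mul t : (t.+1%:R : C) * d t.+1 = (-1) ^+ t.
Proof.
rewrite /d /= mulrC -mulrA mulVf ?mulr1 //.
by rewrite natC_neq0.
Qed.

Lemma Sgood_deriv j R : Sgood j R -> Sgood j R^`().
Proof.
move=> [r [-> h]].
rewrite linear_sum /=; apply: Sgood_sum => i.
rewrite derivZ derivB /T scaler_sumr; apply: Sgood_sum => t.
rewrite scalerA; apply: Sgood_single.
  by have := ltn_ord i; have := ltn_ord t; lia.
have hi : (i <= j)%N by have := ltn_ord i; lia.
have ht : (t < i)%N := ltn_ord t.
have := Qn_K (t.+1) (j - i) (ltn0Sn _).
have -> : ((j - i) + t.+1 = j - (i - t.+1))%N by lia.
case/dvdnP=> w ->.
rewrite !natrM.
have -> : w%:R * (t.+1%:R * (Qn (j - i))%:R) * (r i * d t.+1) =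
          w%:R * (t.+1%:R * d t.+1) * ((Qn (j - i))%:R * r i) :> C.
  by ring.
rewrite d_mul; apply: intC_mul; last exact: h.
by apply: intC_mul; [exact: intC_nat | exact: intC_sign].
Qed.

Lemma Sgood_derivn j R k : Sgood j R -> Sgood j R^`(k).
Proof.
move=> h; elim: k => [|k IH]; first by rewrite derivn0.
by rewrite derivnS; apply: Sgood_deriv.
Qed.

Lemma Sgood_eval n R (z : int) : Sgood n R -> intC ((Qn n)%:R * R.[z%:~R]).
Proof.
move=> [r [-> h]]; rewrite horner_sum mulr_sumr.
elim/big_ind: _ => //; [exact: intC_nat 0 | exact: intC_add | ].
move=> i _; rewrite (hornerZ (r i)).
have hi : (i <= n)%N by have := ltn_ord i; lia.
have := Qn_mono (n - i) n (leq_subr _ _); case/dvdnP=> w ->.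
rewrite natrM.
have -> : w%:R * (Qn (n - i))%:R * (r i * (B i).[z%:~R]) =
          w%:R * ((Qn (n - i))%:R * r i) * (B i).[z%:~R] :> C by ring.
apply: intC_mul; last exact: B_int.
by apply: intC_mul; [exact: intC_nat | exact: h].
Qed.

Lemma En_Sgood n P : En n P -> Sgood n P.
Proof.
move=> [sP hP]; have [c ->] := expand n P sP hP.
apply: Sgood_sum => j; apply: Sgood_single; first by have := ltn_ord j; lia.
by apply: intC_mul; [exact: intC_nat | exact: intC_int].
Qed.

Lemma size_deriv_le (P : {poly C}) : (size P^`() <= size P)%N.
Proof.
have [->|nz] := eqVneq P 0; first by rewrite deriv0.
exact: ltnW (lt_size_deriv nz).
Qed.

Lemma size_derivn_le (P : {poly C}) k : (size P^`(k) <= size P)%N.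
Proof.
elim: k => [|k IH]; first by rewrite derivn0.
by rewrite derivnS; apply: leq_trans (size_deriv_le _) IH.
Qed.

Lemma adm_Q n : admissible C n (Qn n).
Proof.
move=> P k hP; split.
  apply: leq_trans (size_scale_leq _ _) _.
  apply: leq_trans (size_derivn_le _ _) _; by case: hP.
move=> z; rewrite (hornerZ (Qn n)%:R).
exact: (Sgood_eval n _ z (Sgood_derivn n _ k (En_Sgood n P hP))).
Qed.

Lemma derivn_sum k (I : finType) (F : I -> {poly C}) :
  (\sum_i F i)^`(k) = \sum_i (F i)^`(k).
Proof.
have h0 : (0 : {poly C})^`(k) = 0 by rewrite -polyC0 derivnC; case: (k == 0%N).
exact: (big_morph _ (derivnD k) h0).
Qed.

Definition a j k := ((B j)^`(k)).[0].

Lemma a_rec j k : a j k.+1 = \sum_(t < j) d t.+1 * a (j - t.+1) k.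
Proof.
rewrite /a derivSn derivB /T derivn_sum horner_sum; apply: eq_bigr => t _.
by rewrite derivnZ (hornerZ (d _)).
Qed.

Lemma a_0 j : a j 0 = (j == 0)%:R.
Proof. by rewrite /a derivn0 B0. Qed.

Lemma a_zero j k : (j < k)%N -> a j k = 0.
Proof.
elim: k j => [|k IH] j // hj.
rewrite a_rec big1 // => t _; rewrite IH ?mulr0 //.
by have := ltn_ord t; lia.
Qed.

Definition pint (p : nat) (x : C) :=
  exists (u : int) (b : nat), ~~ (p %| b)%N /\ x * b%:R = u%:~R.

Lemma pint_int p x : prime p -> intC x -> pint p x.
Proof.
move=> pp [m ->]; exists m, 1%N; split; last by rewrite mulr1.
by rewrite dvdn1 neq_ltn (prime_gt1 pp) orbT.
Qed.

Lemma pint_nat p (k : nat) : prime p -> pint p k%:R.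
Proof. by move=> pp; apply: pint_int => //; exact: intC_nat. Qed.

Lemma pint_add p x y : prime p -> pint p x -> pint p y -> pint p (x + y).
Proof.
move=> pp [u [b [hb ex]]] [w [c [hc ey]]].
exists (u * c%:Z + w * b%:Z), (b * c)%N; split.
  by rewrite Euclid_dvdM // negb_or hb hc.
rewrite intrD !intrM -ex -ey natrM /=; by ring.
Qed.

Lemma pint_mul p x y : prime p -> pint p x -> pint p y -> pint p (x * y).
Proof.
move=> pp [u [b [hb ex]]] [w [c [hc ey]]].
exists (u * w), (b * c)%N; split.
  by rewrite Euclid_dvdM // negb_or hb hc.
rewrite intrM -ex -ey natrM; by ring.
Qed.

Lemma pint_sum p n (P : pred 'I_n) (F : 'I_n -> C) : prime p ->
  (forall i, P i -> pint p (F i)) -> pint p (\sum_(i | P i) F i).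
Proof.
move=> pp h; elim/big_ind: _ => //; first exact: (pint_nat p 0 pp).
by move=> x y; apply: pint_add.
Qed.

Lemma pint_dlog p t : prime p -> (0 < t)%N ->
  pint p ((p%:R) ^+ (logn p t) * d t).
Proof.
move=> pp t0; have [u cu et] := pfactor_coprime pp t0.
exists ((-1) ^+ t.-1), u; split; first by rewrite -prime_coprime.
have u0 : (0 < u)%N by move: t0; rewrite et muln_gt0 => /andP[].
rewrite /d rmorphXn /= rmorphN1.
have tn : (t%:R : C) != 0 by rewrite natC_neq0.
have -> : (u%:R : C) = t%:R / (p%:R ^+ logn p t).
  have etC : (t%:R : C) = u%:R * (p%:R ^+ logn p t) by rewrite -natrX -natrM -et.
  rewrite etC mulfK //.
  by rewrite expf_neq0 // natC_neq0 // prime_gt0.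
field; apply/andP; split => //.
by rewrite expf_neq0 // natC_neq0 // prime_gt0.
Qed.

Lemma pint_natpow p e (x : C) : prime p -> pint p x -> pint p (p%:R ^+ e * x).
Proof. by move=> pp hx; apply: pint_mul => //; rewrite -natrX; exact: pint_nat. Qed.

Lemma I1 p k j : prime p -> pint p (p%:R ^+ (j %/ p) * a j k).
Proof.
move=> pp; elim: k j => [|k IH] j.
  by rewrite a_0 -natrX -natrM; exact: pint_nat.
rewrite a_rec mulr_sumr; apply: pint_sum => // t _.
have tj : (t < j)%N := ltn_ord t.
have hv := logn_le_div p t.+1 pp (ltn0Sn _).
have hs := divn_add_le t.+1 (j - t.+1) p.
rewrite subnKC // in hs.
have -> : (j %/ p = (j %/ p - logn p t.+1 - (j - t.+1) %/ p) + logn p t.+1 + (j - t.+1) %/ p)%N.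
  move: hv hs; move: (j %/ p)%N (t.+1 %/ p)%N ((j - t.+1) %/ p)%N (logn p t.+1) => A B D V; lia.
rewrite !exprD.
set e1 := (_ - _ - _)%N.
have -> : p%:R ^+ e1 * p%:R ^+ logn p t.+1 * p%:R ^+ ((j - t.+1) %/ p) * (d t.+1 * a (j - t.+1) k)
  = p%:R ^+ e1 * ((p%:R ^+ logn p t.+1 * d t.+1) * (p%:R ^+ ((j - t.+1) %/ p) * a (j - t.+1) k)) :> C.
  by ring.
apply: pint_natpow => //; apply: pint_mul; [done|exact: pint_dlog|exact: IH].
Qed.

Lemma I4 p k j e : prime p -> (j <= (p - 1) * e + k)%N -> pint p (p%:R ^+ e * a j k).
Proof.
move=> pp; have p1 := prime_gt1 pp.
elim: k j e => [|k IH] j e hj.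
  by rewrite a_0 -natrX -natrM; exact: pint_nat.
rewrite a_rec mulr_sumr; apply: pint_sum => // t _.
have tj : (t < j)%N := ltn_ord t.
case: (ltnP (j - t.+1) k) => h.
  by rewrite a_zero // !mulr0; exact: (pint_nat p 0 pp).
have hl := logn_le p t.+1 pp (ltn0Sn _).
have hve : ((p - 1) * logn p t.+1 <= (p - 1) * e)%N by lia.
have ve : (logn p t.+1 <= e)%N by move: hve; rewrite leq_pmul2l //; lia.
have hj' : (j - t.+1 <= (p - 1) * (e - logn p t.+1) + k)%N by rewrite mulnBr; lia.
rewrite -(subnKC ve) exprD.
have -> : p%:R ^+ logn p t.+1 * p%:R ^+ (e - logn p t.+1) * (d t.+1 * a (j - t.+1) k)
  = (p%:R ^+ logn p t.+1 * d t.+1) * (p%:R ^+ (e - logn p t.+1) * a (j - t.+1) k) :> C.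
  by ring.
apply: pint_mul; [done|exact: pint_dlog|exact: IH].
Qed.

Lemma pd_mul p : prime p -> (p%:R : C) * d p = (-1) ^+ p.-1.
Proof.
move=> pp; have := d_mul p.-1; by rewrite prednK // prime_gt0.
Qed.

Lemma I3 p k : prime p -> exists y, pint p y /\
  p%:R ^+ k * a (k * p) k = ((-1) ^+ p.-1) ^+ k + p%:R * y.
Proof.
move=> pp; have p1 := prime_gt1 pp.
elim: k => [|k [y0 [py0 hy0]]].
  exists 0; split; first exact: (pint_nat p 0 pp).
  by rewrite mul0n a_0 /= !expr0 mul1r mulr0 addr0.
have hp : (p.-1 < k.+1 * p)%N by rewrite mulSn; lia.
rewrite a_rec (bigD1 (Ordinal hp)) //=.
have ep : (p.-1.+1 = p)%N by rewrite prednK // prime_gt0.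
have ej : (k.+1 * p - p.-1.+1 = k * p)%N by rewrite ep mulSn addKn.
rewrite ej ep.
set S := \sum_(i < k.+1 * p | i != Ordinal hp) _.
exists ((-1) ^+ p.-1 * y0 + p%:R ^+ k * S); split.
  apply: pint_add => //; first by apply: pint_mul => //; apply: pint_int => //; exact: intC_sign.
  rewrite /S mulr_sumr; apply: pint_sum => // t ht.
  have tn : (t.+1 != p)%N.
    apply: contra ht => /eqP e; apply/eqP/val_inj => /=; lia.
  have tj : (t < k.+1 * p)%N := ltn_ord t.
  move: (nat_of_ord t) tn tj => {ht} t tn tj.
  case: (ltngtP t.+1 p) tn => // hs _.
  -
    have lz : logn p t.+1 = 0%N.
      apply: logn_coprime; rewrite prime_coprime //; apply/negP => /dvdn_leq.
      by move=> /(_ (ltn0Sn _)); lia.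
    have hq : ((k.+1 * p - t.+1) %/ p = k)%N.
      have -> : (k.+1 * p - t.+1 = (p - t.+1) + k * p)%N by rewrite mulSn; lia.
      by rewrite divnDMl ?prime_gt0 // divn_small ?add0n //; lia.
    have -> : p%:R ^+ k * (d t.+1 * a (k.+1 * p - t.+1) k) =
      (p%:R ^+ logn p t.+1 * d t.+1) * (p%:R ^+ ((k.+1 * p - t.+1) %/ p) * a (k.+1 * p - t.+1) k) :> C.
      by rewrite lz hq expr0 mul1r; ring.
    apply: pint_mul; [done|exact: pint_dlog|exact: I1].
  - case: (ltnP (k.+1 * p - t.+1) k) => h.
      by rewrite a_zero // !mulr0; exact: (pint_nat p 0 pp).
    have hl := logn_le_big p t.+1 pp hs.
    have E : ((p - 1) * k + k = k * p)%N by nia.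
    have hve : ((p - 1) * logn p t.+1 <= (p - 1) * k)%N by rewrite mulSn in h tj *; lia.
    have ve : (logn p t.+1 <= k)%N by move: hve; rewrite leq_pmul2l //; lia.
    have hj' : (k.+1 * p - t.+1 <= (p - 1) * (k - logn p t.+1) + k)%N.
      by rewrite mulnBr mulSn; rewrite mulSn in h tj; lia.
    have -> : p%:R ^+ k * (d t.+1 * a (k.+1 * p - t.+1) k) =
      (p%:R ^+ logn p t.+1 * d t.+1) * (p%:R ^+ (k - logn p t.+1) * a (k.+1 * p - t.+1) k) :> C.
      by rewrite -{1}(subnKC ve) exprD; ring.
    apply: pint_mul; [done|exact: pint_dlog|exact: I4].
have -> : p%:R ^+ k.+1 * (d p * a (k * p) k + S) =
  (p%:R * d p) * (p%:R ^+ k * a (k * p) k) + p%:R * (p%:R ^+ k * S) :> C.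
  by rewrite exprS; ring.
rewrite pd_mul // hy0 exprS; ring.
Qed.

Lemma size_B j : (size (B j) <= j.+1)%N.
Proof.
elim: j => [|j IH]; first by rewrite /B size_poly1.
rewrite BS; apply: leq_trans (size_scale_leq _ _) _.
apply: leq_trans (size_polyMleq _ _) _; rewrite size_XsubC addn2 /=; by [].
Qed.

Lemma lower p n l : prime p -> (p <= n)%N -> (0 < l)%N -> admissible C n l ->
  (p ^ (n %/ p) %| l)%N.
Proof.
move=> pp pn l0 adm; set m := (n %/ p)%N.
have p0 := prime_gt0 pp.
have hP : En n (B (m * p)).
  split; last by move=> z; exact: B_int.
  apply: leq_trans (size_B _) _; rewrite ltnS; exact: leq_trunc_div.
have [_ /(_ 0) [M hM]] := adm _ m hP.
rewrite mulr0z (hornerZ l%:R) -/(a (m * p) m) in hM.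
have [y [[u [b [hb hyb]]] hy]] := I3 p m pp.
rewrite pfactor_dvdn //; apply/negPn/negP; rewrite -ltnNge => hv.
have [l' cl el] := pfactor_coprime pp l0.
set v := logn p l in hv el.
set s : int := ((-1) ^+ p.-1) ^+ m.
set W : int := (p%:Z ^+ (m - v).-1 * M * b%:Z - l'%:Z * u)%R.
have eqZ : (l'%:Z * (s * b%:Z) = p%:Z * W)%R.
  apply: (@intr_inj C).
  rewrite /W /s !(intrM, intrB, rmorphXn) /= rmorphN1 -!pmulrn -hyb -hM.
  have epm : (p%:R : C) ^+ m = p%:R ^+ (m - v).-1 * p%:R * p%:R ^+ v.
    by rewrite -exprSr prednK ?subn_gt0 // -exprD subnK // ltnW.
  rewrite epm in hy.
  have es : ((-1) ^+ p.-1) ^+ m = p%:R ^+ (m - v).-1 * p%:R * p%:R ^+ v * a (m * p) m - p%:R * y :> C.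
    by rewrite hy addrK.
  rewrite es el natrM natrX; ring.
have := congr1 absz eqZ; rewrite !abszM /s !abszX abszN1 !exp1n mul1n absz_nat => e.
have : (p %| l' * b)%N by apply/dvdnP; exists `|W|%N; rewrite e mulnC.
rewrite Euclid_dvdM // => /orP[h|h]; first by move: cl; rewrite prime_coprime // h.
by move: hb; rewrite h.
Qed.

End Poly.

Lemma prod_dvd (s : seq nat) : all (fun i => 0 < i)%N s -> (\prod_(i <- s) i %| Qn (sumn s))%N.
Proof.
elim: s => [|i s IH] /=; first by rewrite big_nil dvd1n.
move=> /andP[i0 hs]; rewrite big_cons.
apply: dvdn_trans (dvdn_mul (dvdnn i) (IH hs)) _.
by rewrite addnC; apply: Qn_K.
Qed.

Lemma prod_nseq k p : (\prod_(i <- nseq k p) i = p ^ k)%N.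
Proof. by elim: k => [|k IH]; rewrite ?big_nil // /= big_cons IH expnS. Qed.

Lemma lcm_part n : is_lcm_of (qset n) (Qn n).
Proof.
split.
  move=> x [->|[s [_ [hs [hn ->]]]]]; first exact: dvd1n.
  exact: dvdn_trans (prod_dvd s hs) (Qn_mono _ _ hn).
move=> m h; have [->|m0] := posnP m; first exact: dvdn0.
apply: (Qn_dvd n m m0) => p pp pn.
case E: (n %/ p)%N => [|k]; first by rewrite expn0 dvd1n.
apply: h; right; exists (nseq k.+1 p); split => //; split.
  by apply/allP => i /nseqP[-> _]; exact: prime_gt0.
split; last by rewrite prod_nseq.
by rewrite sumn_nseq -E mulnC leq_trunc_div.
Qed.

Local Open Scope ring_scope.

Theorem theorem4 (C : numClosedFieldType) (n : nat) :
  let Q := (\prod_(p < n.+1 | prime p) p ^ (n %/ p))%N in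
  [/\ (0 < Q)%N, admissible C n Q,
      (forall l : nat, (0 < l)%N -> admissible C n l -> (Q <= l)%N)
    & is_lcm_of (qset n) Q].
Proof.
move=> Q; have -> : Q = Qn n by [].
split.
- exact: Qn_gt0.
- exact: adm_Q.
- move=> l l0 adm.
  exact: (dvdn_leq l0 (Qn_dvd n l l0 (fun p pp pn => lower C p n l pp pn l0 adm))).
- exact: lcm_part.
Qed.
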